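(* Consider the following distributed algorithm. $G=(V,E)$ is a connected undirected graph on $V=\{1,\dots,m\}$ without self-loops, with adjacency matrix $H$, Laplacian $\mathcal{L}$ and maximum degree $\Delta_{\max}$; $0<c<1/\Delta_{\max}$. Priority vectors evolve by $w^i(k+1)=w^i(k)+c\sum_j h^i_j(w^j(k)-w^i(k))$, each $w^i(0)$ having entries in $(0,1)$ summing to $1$. Weights: $a^i_j(k)=w^i_j(k)$ if $(i,j)\in E$; $a^i_i(k)=w^i_i(k)+\sum_{j\ne i,(i,j)\notin E}w^i_j(k)$; $a^i_j(k)=0$ if $j\ne i$, $(i,j)\notin E$. The functions $f_i:\mathbb{R}^n\to\mathbb{R}$ are continuously differentiable and convex, $X\subset\mathbb{R}^n$ is nonempty, compact and convex, $P_X$ is the Euclidean projection onto $X$, and $\alpha_k>0$. Given $x^i(0)\in\mathbb{R}^n$, set $v^i(k)=\sum_j a^i_j(k)x^j(k)$, $d_i(k)=\nabla f_i(x^i(k))$, $x^i(k+1)=P_X[v^i(k)-\alpha_k d_i(k)]$, and $y(k)=\frac1m\sum_{j=1}^m x^j(k)$. Then: (a) if $\lim_{k\to\infty}\alpha_k=0$, then $\lim_{k\to\infty}\|x^i(k)-y(k)\|=0$ for all $i$; (b) if $\sum_{k=1}^\infty\alpha_k^2<\infty$, then $\sum_{k=1}^\infty\alpha_k\|x^i(k)-y(k)\|<\infty$ for all $i$.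
   Context: Each agent $i$ knows only $f_i$; $x^i(k)$ is agent $i$'s decision vector. The gradients are assumed bounded along the iterates: there is a constant $L$ with $\|d_i(k)\|\le L$ for all $i,k$ (the paper derives this from continuity of the gradients and compactness of $X$). *)

(* Defs.v *)
From HB Require Import structures.
From mathcomp Require Import all_boot all_order all_algebra.
From mathcomp Require Import all_classical all_reals all_analysis.
Set Implicit Arguments. Unset Strict Implicit. Unset Printing Implicit Defensive.
Import Order.TTheory GRing.Theory Num.Theory.
Import numFieldNormedType.Exports.
Local Open Scope ring_scope.
Local Open Scope classical_set_scope.

Definition enorm (R : realType) (n : nat) (v : 'rV[R]_n) : R :=
  Num.sqrt (\sum_(j < n) v ord0 j ^+ 2).

Definition edot (R : realType) (n : nat) (u v : 'rV[R]_n) : R :=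
  \sum_(j < n) u ord0 j * v ord0 j.

Definition convex_fun (R : realType) (n : nat) (f : 'rV[R]_n -> R) : Prop :=
  forall x y (t : R), 0 <= t <= 1 ->
    f (t *: x + (1 - t) *: y) <= t * f x + (1 - t) * f y.

Definition is_proj (R : realType) (n : nat) (X : set 'rV[R]_n)
  (P : 'rV[R]_n -> 'rV[R]_n) : Prop :=
  forall z, X (P z) /\ forall x, X x -> enorm (z - P z) <= enorm (z - x).

Definition is_gradient (R : realType) (n : nat) (f : 'rV[R]_n -> R)
  (g : 'rV[R]_n -> 'rV[R]_n) : Prop :=
  forall x, differentiable f x /\ forall h, 'd f x h = edot h (g x).

Definition adj (R : realType) (m : nat) (e : rel 'I_m) (i j : 'I_m) : R :=
  (e i j)%:R.

Definition max_degree (m : nat) (e : rel 'I_m) : nat :=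
  \max_(i < m) #|[set j | e i j]|.

(* Weights a^i_j(k) built from the priority vectors w^i(k) (w k i j = w^i_j(k)). *)
Definition weight (R : realType) (m : nat) (e : rel 'I_m)
  (w : nat -> 'I_m -> 'I_m -> R) (k : nat) (i j : 'I_m) : R :=
  if e i j then w k i j
  else if j == i then w k i i + \sum_(l < m | (l != i) && ~~ e i l) w k i l
  else 0.

(* Main.v *)
From HB Require Import structures.
From mathcomp Require Import all_boot all_order all_algebra.
From mathcomp Require Import all_classical all_reals all_analysis.
From mathcomp Require Import lra ring zify.
Set Implicit Arguments. Unset Strict Implicit. Unset Printing Implicit Defensive.
Import Order.TTheory GRing.Theory Num.Theory.
Import numFieldNormedType.Exports.
Local Open Scope ring_scope.
Local Open Scope classical_set_scope.
Require Import Defs.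
Section Reach.
Variables (R : realType) (m : nat) (e : rel 'I_m) (B : nat -> 'I_m -> 'I_m -> R)
  (eta : R).
Hypothesis B0 : forall t i j, 0 <= B t i j.
Hypothesis Bd : forall t i, eta <= B t i i.
Hypothesis Be : forall t i j, e j i -> eta <= B t i j.
Hypothesis eta0 : 0 <= eta.

Lemma term_le_sum (v : 'I_m -> R) t i j : (forall j, 0 <= v j) ->
  B t i j * v j <= \sum_l B t i l * v l.
Proof.
move=> v0; rewrite (bigD1 j) //= lerDl; apply: sumr_ge0 => l _.
by rewrite mulr_ge0.
Qed.

Lemma reach (T : nat) (v : nat -> 'I_m -> R) l gam :
  (forall t i, 0 <= v t i) ->
  (forall t i, (t < T)%N -> \sum_j B t i j * v t j <= v t.+1 i) ->
  gam <= v 0%N l -> 0 <= gam ->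
  forall t p, (t <= T)%N -> path e l p -> (size p <= t)%N ->
    eta ^+ t * gam <= v t (last l p).
Proof.
move=> v0 vS gl g0; elim=> [|t IH] p tT pp sp.
  by move: sp; rewrite leqn0 => /nilP ->; rewrite expr0 mul1r.
have tT' : (t <= T)%N by apply: ltnW.
have etg : 0 <= eta ^+ t * gam by rewrite mulr_ge0 // exprn_ge0.
rewrite exprS -mulrA.
case: (leqP (size p) t) => st.
  apply: (le_trans _ (vS _ _ tT)); apply: (le_trans _ (@term_le_sum (v t) t _ (last l p) (v0 t))).
  by apply: ler_pM => //; apply: IH.
move: pp sp st; case/lastP: p => [|p a] //.
rewrite rcons_path last_rcons size_rcons !ltnS => /andP[pp ea] sp st.
have spt : size p = t by apply/eqP; rewrite eqn_leq sp st.
apply: (le_trans _ (vS _ _ tT)); apply: (le_trans _ (@term_le_sum (v t) t _ (last l p) (v0 t))).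
apply: ler_pM => //; first by apply: Be.
by apply: IH => //; rewrite spt.
Qed.

Lemma gap (D : nat) (z eps : nat -> 'I_m -> R) (E c0 : R) l :
  (forall t i, \sum_j B t i j = 1) ->
  (forall t i, z t.+1 i = \sum_j B t i j * z t j + eps t i) ->
  (forall t i, (t < D)%N -> `|eps t i| <= E) ->
  (forall i, exists p, path e l p /\ last l p = i /\ (size p <= D)%N) ->
  (forall i, z 0%N i <= c0) ->
  forall i, z D i <= c0 - eta ^+ D * (c0 - z 0%N l) + D%:R * E.
Proof.
move=> Bs zS epsE conn zc i.
pose v t j := (c0 - z t j + t%:R * E)%R.
have E0 : forall t, (t < D)%N -> 0 <= E.
  by move=> t tD; apply: (le_trans _ (epsE t l tD)).
have key : forall t j, (t < D)%N -> \sum_k B t j k * v t k <= v t.+1 j.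
  move=> t j tD.
  have -> : \sum_k B t j k * v t k = c0 - \sum_k B t j k * z t k + t%:R * E.
    rewrite /v; under eq_bigr => k _ do rewrite mulrDr mulrBr.
    rewrite big_split /= sumrB -!mulr_suml Bs !mul1r; by [].
  rewrite /v zS -natr1 mulrDl mul1r.
  have := epsE t j tD; rewrite ler_norml => /andP[h1 h2]; lra.
have vpos : forall t j, (t <= D)%N -> 0 <= v t j.
  elim=> [|t IH] j tD; first by rewrite /v mul0r addr0 subr_ge0.
  apply: (le_trans _ (key _ _ tD)); apply: sumr_ge0 => k _.
  by rewrite mulr_ge0 // IH // ltnW.
pose v' t j := if (t <= D)%N then v t j else 0.
have H : eta ^+ D * (c0 - z 0%N l) <= v D i.
  have := @reach D v' l (c0 - z 0%N l).
  case: (conn i) => p [pp [pl ps]].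
  move=> /(_ _ _ _ _ D p (leqnn D) pp ps); rewrite pl /v' leqnn.
  apply.
  - by move=> t j; case: ifP => // tD; apply: vpos.
  - move=> t j tD; rewrite tD (ltnW tD); exact: key.
  - by rewrite leq0n /v /= mul0r addr0.
  - by rewrite subr_ge0.
rewrite /v in H; lra.
Qed.
End Reach.
Definition mxv (R : realType) (m : nat) (i0 : 'I_m) (z : 'I_m -> R) :=
  \big[Order.max/z i0]_j z j.
Definition mnv (R : realType) (m : nat) (i0 : 'I_m) (z : 'I_m -> R) :=
  \big[Order.min/z i0]_j z j.
Definition spread (R : realType) (m : nat) (i0 : 'I_m) (z : 'I_m -> R) :=
  mxv i0 z - mnv i0 z.

Lemma mxv_ge (R : realType) m i0 (z : 'I_m -> R) j : z j <= mxv i0 z.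
Proof. exact: le_bigmax. Qed.
Lemma mnv_le (R : realType) m i0 (z : 'I_m -> R) j : mnv i0 z <= z j.
Proof. exact: bigmin_le. Qed.
Lemma mxv_le (R : realType) m i0 (z : 'I_m -> R) U :
  (forall j, z j <= U) -> mxv i0 z <= U.
Proof. by move=> h; apply/bigmax_leP; split => // j _; apply: h. Qed.
Lemma mnv_ge (R : realType) m i0 (z : 'I_m -> R) U :
  (forall j, U <= z j) -> U <= mnv i0 z.
Proof. by move=> h; apply/bigmin_geP; split => // j _; apply: h. Qed.
Lemma spread_ge0 (R : realType) m i0 (z : 'I_m -> R) : 0 <= spread i0 z.
Proof. rewrite subr_ge0; exact: (le_trans (mnv_le i0 z i0) (mxv_ge i0 z i0)). Qed.
Lemma spread_bound (R : realType) m i0 (z : 'I_m -> R) i a :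
  (forall j, mnv i0 z <= a j) -> (forall j, a j <= mxv i0 z) ->
  `|z i - a i| <= spread i0 z.
Proof.
move=> h1 h2; have := h1 i; have := h2 i; have := mxv_ge i0 z i;
have := mnv_le i0 z i; rewrite /spread ler_norml; lra.
Qed.

Lemma block (R : realType) (m : nat) (e : rel 'I_m) (B : nat -> 'I_m -> 'I_m -> R)
  (eta : R) (D : nat) (z eps : nat -> 'I_m -> R) (E : R) (i0 : 'I_m) :
  (forall t i j, 0 <= B t i j) ->
  (forall t i, eta <= B t i i) ->
  (forall t i j, e j i -> eta <= B t i j) ->
  0 <= eta ->
  (forall t i, \sum_j B t i j = 1) ->
  (forall t i, z t.+1 i = \sum_j B t i j * z t j + eps t i) ->
  (forall t i, (t < D)%N -> `|eps t i| <= E) ->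
  (forall i, exists p, path e i0 p /\ last i0 p = i /\ (size p <= D)%N) ->
  spread i0 (z D) <= (1 - eta ^+ D) * spread i0 (z 0%N) + 2 * D%:R * E.
Proof.
move=> B0 Bd Be eta0 Bs zS epsE conn.
set M := mxv i0 (z 0%N); set mu := mnv i0 (z 0%N).
have up := gap B0 Bd Be eta0 Bs zS epsE conn (mxv_ge i0 (z 0%N)).
have lo := @gap R m e B eta B0 Bd Be eta0 D (fun t j => - z t j) (fun t j => - eps t j)
  E (- mu) i0 Bs.
have {lo} lo : forall i, - z D i <= - mu - eta ^+ D * (- mu - - z 0%N i0) + D%:R * E.
  apply: lo => //.
  - by move=> t i; rewrite zS opprD -sumrN; congr (_ + _); apply: eq_bigr => j _; rewrite mulrN.
  - by move=> t i tD; rewrite normrN; apply: epsE.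
  - by move=> i; rewrite lerN2; apply: mnv_le.
have h1 : mxv i0 (z D) <= M - eta ^+ D * (M - z 0%N i0) + D%:R * E.
  by apply: mxv_le => j; apply: up.
have h2 : mu + eta ^+ D * (z 0%N i0 - mu) - D%:R * E <= mnv i0 (z D).
  by apply: mnv_ge => j; have := lo j; lra.
rewrite /spread; set q := eta ^+ D; move: h1 h2; rewrite -/q.
set a := mxv i0 (z D); set b := mnv i0 (z D); set z0 := z 0%N i0.
move=> h1 h2.
have -> : (1 - q) * (M - mu) + 2 * D%:R * E =
  (M - q * (M - z0) + D%:R * E) - (mu + q * (z0 - mu) - D%:R * E) by ring.
lra.
Qed.
Lemma seqA (R : realType) (s b : nat -> R) (rho : R) (D : nat) :
  (forall k, 0 <= s k) -> 0 <= rho -> rho < 1 -> (0 < D)%N ->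
  (forall k, s (k + D)%N <= rho * s k + b k) ->
  (forall eps, 0 < eps -> exists N, forall k, (N <= k)%N -> b k <= eps) ->
  s @ \oo --> 0.
Proof.
move=> s0 r0 r1 D0 sD bcv.
apply/cvgr0Pnorm_le => eps eps0.
have e2 : 0 < eps / 2 by rewrite divr_gt0.
have r1s : 0 < 1 - rho by rewrite subr_gt0.
have [N HN] := bcv ((1 - rho) * (eps / 2)) (mulr_gt0 r1s e2).
pose Bs := \sum_(r < D) s (N + r)%N.
have claim : forall j r, (r < D)%N -> s (N + r + j * D)%N <= rho ^+ j * Bs + eps / 2.
  elim=> [|j IH] r rD.
    rewrite mul0n addn0 expr0 mul1r.
    have : s (N + r)%N <= Bs.
      rewrite /Bs (bigD1 (Ordinal rD)) //= lerDl; exact: sumr_ge0.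
    lra.
  have -> : (N + r + j.+1 * D = (N + r + j * D) + D)%N by rewrite mulSn; lia.
  apply: (le_trans (sD _)).
  have hb : b (N + r + j * D)%N <= (1 - rho) * (eps / 2).
    by apply: HN; rewrite -addnA leq_addr.
  have := IH r rD; rewrite exprS => h.
  have : rho * s (N + r + j * D)%N <= rho * (rho ^+ j * Bs + eps / 2).
    by apply: ler_wpM2l.
  rewrite -mulrA; lra.
have r1' : `|rho| < 1 by rewrite ger0_norm.
have := (cvgr0Pnorm_le _).1 (cvg_geometric Bs r1') (eps / 2) e2.
move=> [J _ HJ].
exists (N + J * D)%N => // k /= hk.
rewrite ger0_norm //.
have hkN : (N <= k)%N by apply: leq_trans hk; apply: leq_addr.
have kE : k = (N + (k - N) %% D + (k - N) %/ D * D)%N.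
  have := divn_eq (k - N) D; lia.
have jJ : (J <= (k - N) %/ D)%N.
  by rewrite leq_divRL //; lia.
rewrite kE; apply: (le_trans (claim _ _ (ltn_pmod _ D0))).
have := HJ _ jJ; rewrite /geometric /= mulrC => h.
have := ler_norm (rho ^+ ((k - N) %/ D) * Bs). lra.
Qed.
Lemma shift_sum (R : realType) (u : nat -> R) r N : (forall k, 0 <= u k) ->
  \sum_(k < N) u (k + r)%N <= \sum_(k < N + r) u k.
Proof.
elim: r u => [|r IH] u u0; first by under eq_bigr => k _ do rewrite addn0; rewrite addn0.
under eq_bigr => k _ do rewrite addnS.
apply: (le_trans (IH (fun k => u k.+1) (fun k => u0 _))).
rewrite addnS big_ord_recl /= lerDr; exact: u0.
Qed.

Lemma cs_sum (R : realType) (D : nat) (x : 'I_D -> R) :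
  (\sum_(r < D) x r) ^+ 2 <= D%:R * \sum_(r < D) x r ^+ 2.
Proof.
set S := \sum_(r < D) x r ^+ 2.
have H1 : (\sum_(r < D) x r) ^+ 2 = \sum_(r < D) \sum_(q < D) x r * x q.
  by rewrite expr2 mulr_suml; apply: eq_bigr => r _; rewrite mulr_sumr.
have H2 : \sum_(r < D) \sum_(q < D) x r * x q <=
          \sum_(r < D) \sum_(q < D) (x r ^+ 2 / 2 + x q ^+ 2 / 2).
  apply: ler_sum => r _; apply: ler_sum => q _.
  have := sqr_ge0 (x r - x q); rewrite !expr2; lra.
have H3 : \sum_(r < D) \sum_(q < D) (x r ^+ 2 / 2 + x q ^+ 2 / 2) =
          \sum_(r < D) (x r ^+ 2 / 2 *+ D) + \sum_(r < D) (S / 2).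
  rewrite -big_split /=; apply: eq_bigr => r _.
  by rewrite big_split /= sumr_const card_ord -mulr_suml.
rewrite H1; apply: (le_trans H2); rewrite H3 sumr_const card_ord sumrMnl -mulr_suml.
rewrite -/S; have -> : S / 2 *+ D = D%:R * (S / 2) by rewrite mulr_natl.
lra.
Qed.
Lemma seqB (R : realType) (s a : nat -> R) (rho C : R) (D : nat) (Q : R) :
  (forall k, 0 <= s k) -> (forall k, 0 <= a k) -> 0 <= rho -> rho < 1 -> 0 <= C ->
  (forall k, s (k + D)%N <= rho * s k + C * \sum_(r < D) a (k + r)%N) ->
  (forall N, \sum_(k < N) a k ^+ 2 <= Q) ->
  exists Bd, forall N, \sum_(k < N) a k * s k <= Bd.
Proof.
move=> s0 a0 r0 r1 C0 sD aQ.
have r1s : 0 < 1 - rho by rewrite subr_gt0.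
pose sg k := \sum_(r < D) a (k + r)%N.
pose K := C ^+ 2 / (1 - rho).
have sg0 : forall k, 0 <= sg k by move=> k; apply: sumr_ge0.
have sq : forall k, s (k + D)%N ^+ 2 <= rho * s k ^+ 2 + K * sg k ^+ 2.
  move=> k; set x := C * sg k; set y := s k; set z := s (k + D)%N.
  have x0 : 0 <= x by rewrite mulr_ge0.
  have z0 : 0 <= z by apply: s0.
  have y0 : 0 <= y by apply: s0.
  have hz : z <= rho * y + x by apply: sD.
  have h1 : z ^+ 2 <= (rho * y + x) ^+ 2.
    by rewrite !expr2; apply: ler_pM.
  have -> : K * sg k ^+ 2 = x ^+ 2 / (1 - rho) by rewrite /K /x exprMn mulrAC.
  apply: (le_trans h1).
  rewrite -(ler_pM2l r1s) mulrDr [_ * (x ^+ 2 / _)]mulrC divfK; last by rewrite gt_eqF.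
  have := mulr_ge0 r0 (sqr_ge0 ((1 - rho) * y - x)).
  have -> : rho * ((1 - rho) * y - x) ^+ 2 =
    (1 - rho) * (rho * y ^+ 2) + x ^+ 2 - (1 - rho) * (rho * y + x) ^+ 2 by ring.
  lra.
have sumsg : forall N, \sum_(k < N) sg k ^+ 2 <= D%:R * (D%:R * Q).
  move=> N; apply: (@le_trans _ _ (\sum_(k < N) (D%:R * \sum_(r < D) a (k + r)%N ^+ 2))).
    by apply: ler_sum => k _; apply: cs_sum.
  rewrite -mulr_sumr; apply: ler_wpM2l => //.
  rewrite exchange_big /=.
  apply: (@le_trans _ _ (\sum_(r < D) Q)); last by rewrite sumr_const card_ord mulr_natl.
  apply: ler_sum => r _.
  apply: (le_trans (@shift_sum _ (fun k => a k ^+ 2) r N (fun k => sqr_ge0 _))).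
  exact: aQ.
pose S0 := \sum_(k < D) s k ^+ 2.
pose PB := (S0 + K * (D%:R * (D%:R * Q))) / (1 - rho).
have PN : forall N, \sum_(k < N) s k ^+ 2 <= PB.
  move=> N.
  have split : \sum_(k < N) s k ^+ 2 <= S0 + \sum_(k < N) s (k + D)%N ^+ 2.
    have h : \sum_(k < N) s k ^+ 2 <= \sum_(k < N + D) s k ^+ 2.
      rewrite big_split_ord /= lerDl; apply: sumr_ge0 => k _; apply: sqr_ge0.
    apply: (le_trans h); rewrite addnC big_split_ord /=.
    rewrite /S0; apply: lerD => //; apply: ler_sum => k _.
    by rewrite addnC.
  have h2 : \sum_(k < N) s (k + D)%N ^+ 2 <=
      rho * \sum_(k < N) s k ^+ 2 + K * \sum_(k < N) sg k ^+ 2.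
    rewrite !mulr_sumr -big_split /=; apply: ler_sum => k _; exact: sq.
  have K0 : 0 <= K by rewrite /K divr_ge0 // ?sqr_ge0 // ltW.
  have h3 := ler_wpM2l K0 (sumsg N).
  rewrite /PB ler_pdivlMr //.
  lra.
exists ((Q + PB) / 2) => N.
apply: (@le_trans _ _ (\sum_(k < N) (a k ^+ 2 + s k ^+ 2) / 2)).
  apply: ler_sum => k _; have := sqr_ge0 (a k - s k); rewrite !expr2; lra.
rewrite -mulr_suml big_split /=.
have := aQ N; have := PN N; lra.
Qed.
Lemma enorm_coord (R : realType) n (u : 'rV[R]_n) q :
  `|u ord0 q| <= enorm u.
Proof.
rewrite -sqrtr_sqr /enorm; apply: ler_wsqrtr.
rewrite (bigD1 q) //= lerDl; apply: sumr_ge0 => j _; exact: sqr_ge0.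
Qed.

Lemma enorm_sum (R : realType) n (u : 'rV[R]_n) :
  enorm u <= \sum_q `|u ord0 q|.
Proof.
have h0 : 0 <= \sum_q `|u ord0 q| by apply: sumr_ge0.
rewrite -(ger0_norm h0) -sqrtr_sqr /enorm; apply: ler_wsqrtr.
rewrite expr2 mulr_suml; apply: ler_sum => r _.
rewrite mulr_sumr (bigD1 r) //= -normrM -expr2 ger0_norm ?sqr_ge0 //.
rewrite lerDl; apply: sumr_ge0 => j _; exact: mulr_ge0.
Qed.

Lemma conv_comb (R : realType) n (X : set 'rV[R]_n) (I : eqType) (r : seq I)
  (a : I -> R) (p : I -> 'rV[R]_n) :
  convex_set X -> (forall j, 0 <= a j) -> (forall j, X (p j)) ->
  0 < \sum_(j <- r) a j ->
  X ((\sum_(j <- r) a j)^-1 *: \sum_(j <- r) a j *: p j).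
Proof.
move=> cX a0 pX; elim: r => [|j r IH]; first by rewrite big_nil ltxx.
rewrite !big_cons.
set s' := \sum_(j <- r) a j; set T := \sum_(j <- r) a j *: p j.
have s'0 : 0 <= s' by apply: sumr_ge0.
have [s'e|s'p] := eqVneq s' 0.
  have T0 : T = 0.
    rewrite /T big_seq big1 // => i ir.
    have : all (fun i => true ==> (a i == 0)) r.
      by rewrite -psumr_eq0 //; apply/eqP.
    by move/allP/(_ i ir)/eqP => ->; rewrite scale0r.
  rewrite s'e T0 !addr0 => aj; rewrite scalerA mulVf ?scale1r ?gt_eqF //.
move=> h; have sp : 0 < s' by rewrite lt_neqAle eq_sym s'p.
have IH' := IH sp.
set S := a j + s'.
have S0 : 0 < S by [].
have t0 : 0 <= a j / S by rewrite divr_ge0 // ltW.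
have t1 : a j / S <= 1 by rewrite ler_pdivrMr // mul1r lerDl.
have := cX (p j) (s'^-1 *: T) (Itv01 t0 t1).
rewrite !inE => /(_ (pX j) IH') HX.
change (X ((a j / S) *: p j + (1 - a j / S) *: (s'^-1 *: T))) in HX.
move: HX; congr X.
rewrite scalerDr !scalerA; congr (_ + _).
  by rewrite mulrC.
congr (_ *: _); rewrite /S; field.
by apply/andP; split; rewrite ?gt_eqF.
Qed.
Lemma deg_le (R : realType) m (e : rel 'I_m) i :
  (\sum_(l < m) adj R e i l) <= (max_degree e)%:R.
Proof.
rewrite /adj -natr_sum ler_nat.
have -> : (\sum_(l < m) e i l)%N = #|[set j | e i j]|.
  rewrite -sum1_card [in RHS]big_mkcond /=; apply: eq_bigr => l _.
  case: ifPn => [|/negP]; rewrite ?in_setE /=; case: (e i l) => //.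
exact: (leq_bigmax (F := fun i => #|[set j | e i j]|)).
Qed.

Lemma adj_ge0 (R : realType) m (e : rel 'I_m) i l : 0 <= adj R e i l.
Proof. exact: ler0n. Qed.

Lemma w_rowsum (R : realType) m (e : rel 'I_m) (c : R) (w : nat -> 'I_m -> 'I_m -> R) :
  (forall i, \sum_(j < m) w 0%N i j = 1) ->
  (forall k i j, w k.+1 i j =
     w k i j + c * \sum_(l < m) adj R e i l * (w k l j - w k i j)) ->
  forall k i, \sum_(j < m) w k i j = 1.
Proof.
move=> w0 wS; elim=> [|k IH] i; first exact: w0.
under eq_bigr => j _ do rewrite wS.
rewrite big_split /= IH -mulr_sumr exchange_big /=.
rewrite big1 ?mulr0 ?addr0 // => l _.
by rewrite -mulr_sumr sumrB !IH subrr mulr0.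
Qed.

Lemma w_lower (R : realType) m (e : rel 'I_m) (c : R) (w : nat -> 'I_m -> 'I_m -> R) dl :
  0 < c -> c * (max_degree e)%:R < 1 ->
  (forall i j, dl <= w 0%N i j) ->
  (forall k i j, w k.+1 i j =
     w k i j + c * \sum_(l < m) adj R e i l * (w k l j - w k i j)) ->
  forall k i j, dl <= w k i j.
Proof.
move=> c0 cD w0 wS; elim=> [|k IH] i j; first exact: w0.
rewrite wS.
set deg := \sum_(l < m) adj R e i l.
have h1 : deg * (dl - w k i j) <= \sum_(l < m) adj R e i l * (w k l j - w k i j).
  rewrite /deg mulr_suml; apply: ler_sum => l _; apply: ler_wpM2l; first exact: adj_ge0.
  by rewrite lerD2r.
have h2 : c * (deg * (dl - w k i j)) <= c * \sum_(l < m) adj R e i l * (w k l j - w k i j).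
  by apply: ler_wpM2l => //; apply: ltW.
have h3 : c * deg <= 1.
  apply: (le_trans _ (ltW cD)); apply: ler_wpM2l; [exact: ltW | exact: deg_le].
have h4 : (c * deg) * (w k i j - dl) <= w k i j - dl.
  by apply: ler_piMl => //; rewrite subr_ge0.
have e2 : c * (deg * (dl - w k i j)) = - ((c * deg) * (w k i j - dl)) by ring.
rewrite e2 in h2.
lra.
Qed.

Lemma weight_facts (R : realType) m (e : rel 'I_m) (w : nat -> 'I_m -> 'I_m -> R) dl k :
  irreflexive e -> 0 <= dl -> (forall i j, dl <= w k i j) ->
  (forall i, \sum_(j < m) w k i j = 1) ->
  [/\ (forall i j, 0 <= weight e w k i j),
      (forall i, dl <= weight e w k i i),
      (forall i j, e i j -> dl <= weight e w k i j) &
      (forall i, \sum_(j < m) weight e w k i j = 1)].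
Proof.
move=> irr dl0 wl ws.
have w0 : forall i j, 0 <= w k i j by move=> i j; apply: le_trans (wl i j).
have sum0 : forall i, 0 <= \sum_(l < m | (l != i) && ~~ e i l) w k i l.
  by move=> i; apply: sumr_ge0.
split.
- move=> i j; rewrite /weight; case: (e i j) => //; case: (j == i) => //.
  by rewrite addr_ge0.
- move=> i; rewrite /weight irr eqxx; apply: le_trans (wl i i) _; rewrite lerDl //.
- by move=> i j eij; rewrite /weight eij.
- move=> i; rewrite -(ws i) (bigID (e i)) [in RHS](bigID (e i)) /=; congr (_ + _).
    by apply: eq_bigr => j eij; rewrite /weight eij.
  have nii : ~~ e i i by rewrite irr.
  rewrite (bigD1 i nii) [in RHS](bigD1 i nii) /=.
  rewrite big1 ?addr0; last first.
    by move=> j /andP[nij ji]; rewrite /weight (negbTE nij) (negbTE ji).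
  rewrite /weight irr eqxx; congr (_ + _); apply: eq_bigl => j.
  by rewrite andbC.
Qed.
Lemma coord_le_norm (R : realType) n (u : 'rV[R]_n) q : `|u ord0 q| <= `|u|.
Proof.
rewrite /Num.norm /= mx_normrE.
exact: (le_bigmax _ (fun ij : 'I_1 * 'I_n => `|u ij.1 ij.2|) (ord0, q)).
Qed.

Lemma conn_bound m (e : rel 'I_m) :
  (forall i j, connect e i j) ->
  forall l i, exists p, path e l p /\ last l p = i /\ (size p <= m)%N.
Proof.
move=> ec l i; have /connectP [p pp ->] := ec l i.
case: (shortenP pp) => p' pp' up' _.
exists p'; split => //; split => //.
have := card_uniqP up'; have := max_card [pred x in l :: p'].
rewrite card_ord /= => h1 h2.
apply: ltnW; apply: leq_trans h1.
have -> : #|[pred x in l :: p']| = #|l :: p'| by apply: eq_card => x.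
by rewrite h2.
Qed.
Lemma grad_bound (R : realType) m n (g : 'I_m -> 'rV[R]_n -> 'rV[R]_n)
  (X : set 'rV[R]_n) :
  (forall i, continuous (g i)) -> compact X ->
  exists M, forall i x, X x -> `|g i x| <= M.
Proof.
move=> gc Xc.
have H : forall i, \forall M \near +oo, forall y, (g i @` X) y -> `|y| <= M.
  move=> i; exact: (compact_bounded (continuous_compact (continuous_subspaceT (gc i)) Xc)).
have := filter_forall _ H; case=> M0 [_ HM].
exists (M0 + 1) => i x Xx.
have := HM (M0 + 1); rewrite ltrDl ltr01 => /(_ isT i (g i x)); apply.
by exists x.
Qed.
Unset Implicit Arguments.

Theorem lemma4p7 (R : realType) (m n : nat)
  (e : rel 'I_m) (c : R)
  (w : nat -> 'I_m -> 'I_m -> R)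
  (f : 'I_m -> 'rV[R]_n -> R) (g : 'I_m -> 'rV[R]_n -> 'rV[R]_n)
  (X : set 'rV[R]_n) (PX : 'rV[R]_n -> 'rV[R]_n)
  (alpha : nat -> R) (x : nat -> 'I_m -> 'rV[R]_n) :
  (* G: undirected, no self-loops, connected *)
  symmetric e -> irreflexive e -> (forall i j, connect e i j) ->
  (* 0 < c < 1 / Delta_max *)
  0 < c -> c * (max_degree e)%:R < 1 ->
  (* priority vectors *)
  (forall i j, 0 < w 0%N i j < 1) ->
  (forall i, \sum_(j < m) w 0%N i j = 1) ->
  (forall k i j, w k.+1 i j =
     w k i j + c * \sum_(l < m) adj R e i l * (w k l j - w k i j)) ->
  (* objective functions *)
  (forall i, is_gradient (f i) (g i)) ->
  (forall i, continuous (g i)) ->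
  (forall i, convex_fun (f i)) ->
  (* constraint set and projection *)
  X !=set0 -> compact X -> convex_set X -> is_proj X PX ->
  (* step sizes *)
  (forall k, 0 < alpha k) ->
  (* iteration *)
  (forall k i, x k.+1 i =
     PX ((\sum_(j < m) weight e w k i j *: x k j) - alpha k *: g i (x k i))) ->
  let y := fun k => (m%:R)^-1 *: \sum_(j < m) x k j in
  (alpha @ \oo --> 0 ->
     forall i, (fun k => enorm (x k i - y k)) @ \oo --> 0)
  /\
  (cvgn (series (fun k => alpha k ^+ 2)) ->
     forall i, cvgn (series (fun k => alpha k * enorm (x k i - y k)))).
Proof.
move=> esym eirr econn c0 cD w01 wsum0 wS grad gcont fconv Xne Xcomp Xconv Xproj
  alpha0 xS y.
have core : forall i0 : 'I_m, exists (S : nat -> R) (rho C : R) (D : nat),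
  [/\ (forall k, 0 <= S k), 0 <= rho, rho < 1, 0 <= C & (0 < D)%N] /\
  (forall k, S (D + k.+1)%N <= rho * S k.+1 + C * \sum_(r < D) alpha (r + k.+1)%N) /\
  (forall k i, enorm (x k i - y k) <= S k).
  move=> i0.
  pose dl := \big[Order.min/1]_(p : 'I_m * 'I_m) w 0%N p.1 p.2.
  have dl0 : 0 < dl.
    by apply: lt_bigmin => // p _; case/andP: (w01 p.1 p.2).
  have dlw : forall i j, dl <= w 0%N i j.
    by move=> i j; exact: (bigmin_le _ (i, j)).
  have dl1 : dl < 1.
    by apply: (le_lt_trans (dlw i0 i0)); case/andP: (w01 i0 i0).
  have ws := w_rowsum wsum0 wS.
  have wl := w_lower c0 cD dlw wS.
  have WF := fun k => weight_facts eirr (ltW dl0) (wl k) (ws k).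
  have [M HM] := grad_bound gcont Xcomp.
  have M0 : 0 <= M.
    by case: Xne => x0 Xx0; apply: le_trans (HM i0 x0 Xx0).
  pose Lg := n%:R * M.
  have Lg0 : 0 <= Lg by rewrite mulr_ge0.
  have xX : forall k i, X (x k.+1 i) by move=> k i; rewrite xS; exact: (Xproj _).1.
  have vX : forall k i, X (\sum_(j < m) weight e w k.+1 i j *: x k.+1 j).
    move=> k i; have [W0 _ _ Ws] := WF k.+1.
    have := @conv_comb R n X _ (index_enum 'I_m) (weight e w k.+1 i) (x k.+1)
      Xconv (W0 i) (xX k).
    by rewrite Ws invr1 scale1r; apply; rewrite ltr01.
  pose eps q k i := x k.+1 i ord0 q - \sum_(j < m) weight e w k i j * x k j ord0 q.
  have epsB : forall q k i, `|eps q k.+1 i| <= 2 * (alpha k.+1 * Lg).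
    move=> q k i.
    set v := \sum_(j < m) weight e w k.+1 i j *: x k.+1 j.
    set zz := v - alpha k.+1 *: g i (x k.+1 i).
    have xe : x k.+2 i = PX zz by rewrite xS.
    have ve : v ord0 q = \sum_(j < m) weight e w k.+1 i j * x k.+1 j ord0 q.
      by rewrite /v summxE; apply: eq_bigr => j _; rewrite mxE.
    have -> : eps q k.+1 i = (zz - v) ord0 q - (zz - PX zz) ord0 q.
      by rewrite /eps xe -ve !mxE; ring.
    have [_ Hp] := Xproj zz.
    have h1 := Hp v (vX k i).
    have hzv : enorm (zz - v) <= alpha k.+1 * Lg.
      have -> : zz - v = - (alpha k.+1 *: g i (x k.+1 i)) by rewrite /zz addrAC subrr add0r.
      apply: (le_trans (enorm_sum _)).
      apply: (@le_trans _ _ (\sum_(q0 < n) alpha k.+1 * M)).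
        apply: ler_sum => q0 _; rewrite !mxE normrN normrM (ger0_norm (ltW (alpha0 _))).
        apply: ler_wpM2l; first exact: ltW.
        exact: (le_trans (coord_le_norm _ _) (HM _ _ (xX k i))).
      by rewrite sumr_const card_ord /Lg mulr_natl mulrnAr.
    apply: (le_trans (ler_normB _ _)).
    have := enorm_coord (zz - v) q; have := enorm_coord (zz - PX zz) q.
    lra.
  have m0 : (0 < m)%N by apply: leq_ltn_trans (ltn_ord i0).
  pose S k := \sum_(q < n) spread i0 (fun i => x k i ord0 q).
  pose C := n%:R * 2 * m%:R * 2 * Lg.
  exists S, (1 - dl ^+ m), C, m.
  split; [split|split].
  - by move=> k; apply: sumr_ge0 => q _; exact: spread_ge0.
  - by rewrite subr_ge0 exprn_ile1 // ltW.
  - by rewrite ltrBlDr ltrDl exprn_gt0.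
  - by rewrite /C !mulr_ge0.
  - exact: m0.
  - move=> k; set sg := \sum_(r < m) alpha (r + k.+1)%N.
    have sg0 : 0 <= sg by apply: sumr_ge0 => r _; exact: ltW.
    have hq : forall q, spread i0 (fun i => x (m + k.+1)%N i ord0 q) <=
        (1 - dl ^+ m) * spread i0 (fun i => x k.+1 i ord0 q) +
        2 * m%:R * (2 * (Lg * sg)).
      move=> q.
      have := @block R m e (fun t => weight e w (t + k.+1)%N) dl m
        (fun t i => x (t + k.+1)%N i ord0 q) (fun t i => eps q (t + k.+1)%N i)
        (2 * (Lg * sg)) i0.
      apply.
      + by move=> t i j; have [W0 _ _ _] := WF (t + k.+1)%N; apply: W0.
      + by move=> t i; have [_ Wd _ _] := WF (t + k.+1)%N; apply: Wd.
      + move=> t i j eji; have [_ _ We _] := WF (t + k.+1)%N; apply: We.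
        by rewrite esym.
      + exact: ltW.
      + by move=> t i; have [_ _ _ Ws] := WF (t + k.+1)%N; apply: Ws.
      + by move=> t i; rewrite /eps /= addrC subrK.
      + move=> t i tm; rewrite addnS; apply: (le_trans (epsB _ _ _)).
        rewrite -addnS; apply: ler_wpM2l => //; rewrite mulrC; apply: ler_wpM2l => //.
        rewrite /sg (bigD1 (Ordinal tm)) //= lerDl; apply: sumr_ge0 => r _; exact: ltW.
      + exact: conn_bound econn i0.
    apply: (le_trans (ler_sum _ (fun q _ => hq q))).
    rewrite big_split /= -mulr_sumr sumr_const card_ord lerD2l /C.
    rewrite -[X in X <= _]mulr_natl le_eqVlt; apply/orP; left; apply/eqP; ring.
  - move=> k i; apply: (le_trans (enorm_sum _)); apply: ler_sum => q _.
    have ye : y k ord0 q = (\sum_(j < m) x k j ord0 q) / m%:R.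
      by rewrite /y mxE summxE mulrC.
    have m0R : 0 < m%:R :> R by rewrite ltr0n.
    rewrite !mxE summxE [_^-1 * _]mulrC.
    apply: (@spread_bound R m i0 (fun i => x k i ord0 q) i (fun _ => (\sum_(j < m) x k j ord0 q) / m%:R)) => j.
      rewrite ler_pdivlMr //.
      apply: (@le_trans _ _ (\sum_(l < m) mnv i0 (fun i => x k i ord0 q))).
        by rewrite sumr_const card_ord mulr_natr.
      by apply: ler_sum => l _; apply: mnv_le.
    rewrite ler_pdivrMr //.
    apply: (@le_trans _ _ (\sum_(l < m) mxv i0 (fun i => x k i ord0 q))).
      by apply: ler_sum => l _; exact: (mxv_ge i0 (fun i => x k i ord0 q) l).
    by rewrite sumr_const card_ord mulr_natr.
have homo : forall u : nat -> R, (forall k, 0 <= u k) ->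
    {homo series u : a b / (a <= b)%N >-> a <= b}.
  move=> u u0 a b ab; rewrite !seriesEnat /=.
  exact: (@nondecreasing_series R u predT 0%N (fun k _ _ => u0 k)).
have en0 : forall v : 'rV[R]_n, 0 <= enorm v by move=> v; exact: sqrtr_ge0.
split.
- move=> acv i.
  have [S [rho [C [D [[S0 r0 r1 C0 D0] [SD Se]]]]]] := core i.
  have sS : (fun k => S k.+1) @ \oo --> 0.
    apply: (@seqA R (fun k => S k.+1) (fun k => C * \sum_(r < D) alpha (r + k.+1)%N)
      rho D _ r0 r1 D0).
    + by move=> k; exact: S0.
    + by move=> k; rewrite -addSn addnC; exact: SD.
    + move=> eps eps0.
      set P := C * D%:R.
      have P0 : 0 <= P by rewrite mulr_ge0.
      have P1 : 0 < P + 1 by rewrite ltr_wpDl.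
      have e' : 0 < eps / (P + 1) by rewrite divr_gt0.
      have [N _ HN] := (cvgr0Pnorm_le _).1 acv _ e'.
      exists N => k kN.
      apply: (@le_trans _ _ (C * \sum_(r < D) (eps / (P + 1)))).
        apply: ler_wpM2l => //; apply: ler_sum => r _.
        apply: le_trans (ler_norm _) _; apply: HN => /=.
        by apply: leq_trans kN _; rewrite addnS leqW // leq_addl.
      rewrite sumr_const card_ord -mulr_natl mulrA -/P.
      have h : P / (P + 1) <= 1 by rewrite ler_pdivrMr // mul1r lerDl.
      have -> : C * (D%:R * eps / (P + 1)) = (P / (P + 1)) * eps.
        by rewrite /P !mulrA mulrAC.
      by apply: ler_piMl => //; exact: ltW.
  have HS : S @ \oo --> 0 by rewrite -cvg_shiftS.
  apply/cvgr0Pnorm_le => eps eps0.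
  have [N _ HN] := (cvgr0Pnorm_le _).1 HS eps eps0.
  exists N => // k /= kN; have := HN k kN; rewrite /=.
  rewrite (ger0_norm (S0 k)) (ger0_norm (en0 _)); exact: le_trans (Se k i).
- move=> scv i.
  have [S [rho [C [D [[S0 r0 r1 C0 D0] [SD Se]]]]]] := core i.
  have a2h := homo _ (fun k => sqr_ge0 (alpha k)).
  have aQ : forall N, \sum_(k < N) alpha k.+1 ^+ 2 <= limn (series (fun k => alpha k ^+ 2)).
    move=> N; apply: le_trans (nondecreasing_cvgn_le a2h scv N.+1).
    by rewrite seriesEord /= big_ord_recl /= lerDr sqr_ge0.
  have SD' : forall k, S (k + D).+1 <= rho * S k.+1 + C * \sum_(r < D) alpha (k + r).+1.
    move=> k; rewrite -addSn addnC.
    under eq_bigr => r _ do rewrite addnC -addnS.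
    exact: SD.
  have [Bd HB] := @seqB R (fun k => S k.+1) (fun k => alpha k.+1) rho C D _
    (fun k => S0 _) (fun k => ltW (alpha0 _)) r0 r1 C0 SD' aQ.
  have t0 : forall k, 0 <= alpha k * enorm (x k i - y k).
    by move=> k; rewrite mulr_ge0 // ltW.
  apply: nondecreasing_is_cvgn; first exact: homo.
  exists (alpha 0%N * S 0%N + Bd) => _ [N _ <-].
  have t1 : forall k, 0 <= alpha k * S k by move=> k; rewrite mulr_ge0 // ltW.
  apply: (@le_trans _ _ (series (fun k => alpha k * S k) N)).
    rewrite !seriesEord /=; apply: ler_sum => k _; apply: ler_wpM2l; first exact: ltW.
    exact: Se.
  apply: (le_trans (homo _ t1 _ _ (leqnSn N))).
  rewrite seriesEord /= big_ord_recl /= lerD2l; exact: HB.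
Qed.
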